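(* Let $C$ be a finite set of $m$ candidates, $N=\{1,\dots,n\}$ voters with weak orders over $C$, $k\le m$ a positive integer, $\mathbf w\in\mathbb N^m$ non-increasing and $\boldsymbol\alpha\in\mathbb R^k$ with $\alpha_1\ge\dots\ge\alpha_k\ge0$. Set $w_{m+1}=0$, $w'_r=w_r-w_{r+1}$. Consider the integer program (OWA-IP) with variables $x_{i,\ell,r}$ ($i\in N,\ell\in[k],r\in[m]$) and $y_c$ ($c\in C$): maximise $\sum_{i\in N}\sum_{\ell\in[k]}\sum_{r\in[m]}\alpha_\ell w'_r x_{i,\ell,r}$ subject to $\sum_{c\in C}y_c=k$; $\sum_{\ell\in[k]}x_{i,\ell,r}\le\sum_{c:\ \mathrm{rank}_i(c)\le r}y_c$ for all $i\in N,r\in[m]$; $x_{i,\ell,r}\in\{0,1\}$; $y_c\in\{0,1\}$. Then the optimal value of (OWA-IP) equals $\max_{W\subseteq C,|W|=k}\sum_{i\in N}\boldsymbol\alpha\big((w_{\mathrm{rank}_i(c)})_{c\in W}\big)$, and for every optimal solution $W=\{c:y_c=1\}$ is an optimal committee for the OWA-based rule defined by $\boldsymbol\alpha$ and $\mathbf w$.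
   Context: Ranks: a weak order partitions $C$ into indifference classes $A_1\succ\dots\succ A_r$; a candidate in $A_t$ has rank $t$ (rank 1 = most preferred). For $\mathbf x\in\mathbb R^k$, $\boldsymbol\alpha(\mathbf x)=\sum_j\alpha_jx_{\sigma(j)}$ where $x_{\sigma(1)}\ge\dots\ge x_{\sigma(k)}$. The OWA-based rule selects a size-$k$ committee maximising $\sum_i\boldsymbol\alpha((w_{\mathrm{rank}_i(c)})_{c\in W})$. *)

(* Defs.v *)
From HB Require Import structures.
From mathcomp Require Import all_boot all_order all_algebra.
From mathcomp Require Import reals.
Set Implicit Arguments. Unset Strict Implicit. Unset Printing Implicit Defensive.
Import Order.TTheory GRing.Theory Num.Theory.
Local Open Scope ring_scope.

Section Defs.
Variable C : finType.

(* A weak order: R a b means "a is weakly preferred to b" (a ⪰ b). *)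
Definition weak_order (R : rel C) : Prop :=
  (forall a b, R a b || R b a) /\ transitive R.

Definition indiff_class (R : rel C) (e : C) : {set C} :=
  [set d | R d e && R e d].

Definition rank (R : rel C) (c : C) : nat :=
  (#|[set indiff_class R e | e in [set e | R e c && ~~ R c e]]|).+1.

Variable (Rt : realType) (k : nat) (alpha : 'I_k -> Rt).

Definition owa (s : seq Rt) : Rt :=
  \sum_(j < k) alpha j * nth 0 (sort (>=%R) s) j.

Variable (n : nat) (P : 'I_n -> rel C) (w : nat -> nat).

Definition owa_score (W : {set C}) : Rt :=
  \sum_(i < n) owa [seq ((w (rank (P i) c))%:R : Rt) | c <- enum W].

Definition optimal_committee (W : {set C}) : Prop :=
  #|W| = k /\ forall W' : {set C}, #|W'| = k -> owa_score W' <= owa_score W.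

Variable m : nat.

Definition wext (r : nat) : nat := if (r <= m)%N then w r else 0%N.
Definition wdiff (r : nat) : Rt := (wext r)%:R - (wext r.+1)%:R.

Definition ip_feasible (x : 'I_n -> 'I_k -> nat -> bool) (y : C -> bool) : Prop :=
  (\sum_(c : C) (y c : nat) = k)%N /\
  forall (i : 'I_n) (r : nat), (1 <= r <= m)%N ->
    (\sum_(l < k) (x i l r : nat) <= #|[set c | y c && (rank (P i) c <= r)%N]|)%N.

Definition ip_obj (x : 'I_n -> 'I_k -> nat -> bool) : Rt :=
  \sum_(i < n) \sum_(l < k) \sum_(1 <= r < m.+1) alpha l * wdiff r * ((x i l r : nat)%:R).

Definition ip_optimal x y : Prop :=
  ip_feasible x y /\
  forall x' y', ip_feasible x' y' -> ip_obj x' <= ip_obj x.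

End Defs.

(* Main.v *)
Require Import Defs.
From HB Require Import structures.
From mathcomp Require Import all_boot all_order all_algebra.
From mathcomp Require Import reals.
From mathcomp Require Import zify.
Import Order.TTheory GRing.Theory Num.Theory.
Local Open Scope ring_scope.
Lemma card_lt k N : (N <= k)%N -> #|[set l : 'I_k | (l < N)%N]| = N.
Proof.
move=> hN; rewrite -sum1_card.
rewrite (eq_bigl (fun l : 'I_k => (l < N)%N)); last by move=> l; rewrite inE.
by rewrite -(big_ord_widen _ (fun=> 1%N) hN) sum1_card card_ord.
Qed.
Arguments card_lt {k N}.


Lemma rearr (Rt : realType) k (alpha : 'I_k -> Rt) (b : 'I_k -> bool) (N : nat) :
  (forall l1 l2 : 'I_k, (l1 <= l2)%N -> alpha l2 <= alpha l1) ->
  (forall l, 0 <= alpha l) ->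
  (\sum_(l < k) (b l : nat) <= N)%N ->
  \sum_(l < k) alpha l * (b l)%:R <= \sum_(l < k) alpha l * (l < N)%N%:R.
Proof.
move=> hdec hpos hsum.
set S := [set l | b l]; set T := [set l : 'I_k | (l < N)%N].
have eS : \sum_(l < k) alpha l * (b l)%:R = \sum_(l in S) alpha l.
  rewrite [RHS]big_mkcond; apply: eq_bigr => l _; rewrite inE.
  by case: (b l); rewrite ?mulr1 ?mulr0.
have eT : \sum_(l < k) alpha l * (l < N)%N%:R = \sum_(l in T) alpha l.
  rewrite [RHS]big_mkcond; apply: eq_bigr => l _; rewrite inE.
  by case: (l < N)%N; rewrite ?mulr1 ?mulr0.
have cS : (#|S| <= N)%N.
  rewrite -sum1_card (leq_trans _ hsum) // big_mkcond /=.
  by rewrite leq_eqVlt; apply/orP; left; apply/eqP; apply: eq_bigr => l _; rewrite inE; case: (b l).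
rewrite eS eT (big_setID T) [in X in _ <= X](big_setID S) setIC lerD2l.
case: (ltnP N k) => hN.
- pose v := alpha (Ordinal hN).
  apply: (le_trans (y := \sum_(l in S :\: T) v)).
    apply: ler_sum => l; rewrite !inE -leqNgt => /andP[hl _].
    by apply: hdec.
  apply: (le_trans (y := \sum_(l in T :\: S) v)).
    rewrite !sumr_const; apply: ler_wpMn2l; first exact: hpos.
    by rewrite !cardsD setIC leq_sub2r // card_lt // ltnW.
  apply: ler_sum => l; rewrite !inE => /andP[_ hl].
  by apply: hdec; rewrite /= ltnW.
- have -> : S :\: T = set0.
    by apply/setP => l; rewrite !inE (leq_trans (ltn_ord l) hN).
  by rewrite big_set0; apply: sumr_ge0 => l _.
Qed.
Lemma ge_sorted_nth (Rt : realType) (t : seq Rt) i j :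
  sorted >=%R t -> (i <= j)%N -> (j < size t)%N -> nth 0 t j <= nth 0 t i.
Proof.
move=> st hij hj.
have tr : transitive (>=%R : rel Rt) by move=> y x z h1 h2; exact: le_trans h2 h1.
have rf : reflexive (>=%R : rel Rt) by move=> x; exact: lexx.
by apply: (sorted_leq_nth tr rf 0 st); rewrite ?inE /=; lia.
Qed.

Lemma nth_ge_of_count (Rt : realType) (t : seq Rt) j (v : Rt) :
  sorted >=%R t -> (j < count (fun x : Rt => (v <= x)%R) t)%N -> v <= nth 0 t j.
Proof.
move=> st hc.
have hj : (j < size t)%N by apply: leq_trans hc (count_size _ _).
rewrite leNgt; apply/negP => hlt.
move: hc; rewrite -(cat_take_drop j t) count_cat.
have -> : count (fun x => v <= x) (drop j t) = 0%N.
  apply/eqP; rewrite -leqn0 leqNgt -has_count; apply/hasPn => x /(nthP 0) [i hi <-].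
  rewrite nth_drop -ltNge; apply: le_lt_trans hlt.
  apply: ge_sorted_nth => //; first exact: leq_addr.
  by move: hi; rewrite size_drop ltn_subRL.
rewrite addn0 => hc; have h := count_size (fun x : Rt => (v <= x)%R) (take j t); rewrite size_take hj in h.
by move: (leq_trans hc h); rewrite ltnn.
Qed.

Lemma nth_le_of_count (Rt : realType) (t : seq Rt) j (v : Rt) :
  sorted >=%R t -> (j < size t)%N ->
  (size t - j <= count (fun x : Rt => (x <= v)%R) t)%N -> nth 0 t j <= v.
Proof.
move=> st hj hc.
rewrite leNgt; apply/negP => hlt.
move: hc; rewrite -{2}(cat_take_drop j.+1 t) count_cat.
have -> : count (fun x => x <= v) (take j.+1 t) = 0%N.
  apply/eqP; rewrite -leqn0 leqNgt -has_count; apply/hasPn => x /(nthP 0) [i hi <-].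
  have hij : (i < j.+1)%N.
    move: hi; rewrite size_take; case: ifP => // hs hi.
    by apply: leq_trans hi _; rewrite leqNgt hs.
  rewrite nth_take // -ltNge; apply: lt_le_trans hlt _.
  by apply: ge_sorted_nth.
rewrite add0n => hc; have h := count_size (fun x : Rt => (x <= v)%R) (drop j.+1 t).
rewrite size_drop in h; move: (leq_trans hc h); rewrite subnS.
have := subn_gt0 j (size t); rewrite hj; case: (size t - j)%N => [|q] //= _; by rewrite ltnn.
Qed.

Lemma rank_le (C : finType) (R : rel C) c : weak_order R -> (rank R c <= #|C|)%N.
Proof.
move=> [tot _]; rewrite /rank.
have Rcc : R c c by have := tot c c; rewrite orbb.
set A := [set e | R e c && ~~ R c e].
have : A \subset [set~ c].
  by apply/subsetP => e; rewrite !inE; apply: contraTneq => ->; rewrite Rcc.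
move/subset_leq_card; rewrite cardsC1 => hA.
have := leq_imset_card (indiff_class R) A.
have : (0 < #|C|)%N by apply/card_gt0P; exists c.
move=> h0 hI; apply: (leq_ltn_trans hI); apply: (leq_ltn_trans hA); by rewrite ltn_predL.
Qed.

Lemma card_count (C : finType) (W : {set C}) (p : pred C) :
  #|[set c | (c \in W) && p c]| = count p (enum W).
Proof.
rewrite -sum1_count big_enum_cond -sum1_card.
by apply: eq_bigl => c; rewrite inE.
Qed.

Lemma nth_val (Rt : realType) (C : finType) (m k : nat) (R : rel C) (w : nat -> nat)
  (W : {set C}) (j : nat) :
  #|C| = m -> weak_order R ->
  (forall r s : nat, (1 <= r)%N -> (r <= s)%N -> (s <= m)%N -> (w s <= w r)%N) ->
  #|W| = k -> (j < k)%N ->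
  nth 0 (sort >=%R [seq ((w (rank R c))%:R : Rt) | c <- enum W]) j =
  \sum_(1 <= r < m.+1) wdiff Rt w m r *
     ((j < #|[set c | (c \in W) && (rank R c <= r)%N]|)%N%:R).
Proof.
move=> hC wo wmono hW hj.
set s := [seq _ | c <- enum W].
pose N r := count (fun c => rank R c <= r)%N (enum W).
have eN : forall r, #|[set c | (c \in W) && (rank R c <= r)%N]| = N r.
  by move=> r; rewrite card_count.
under eq_bigr do rewrite eN.
have rk1 : forall c, (1 <= rank R c)%N by [].
have rkm : forall c, (rank R c <= m)%N by move=> c; rewrite -hC rank_le.
have szW : size (enum W) = k by rewrite -cardE.
have Nm : N m = k.
  by rewrite /N -szW; apply/eqP; rewrite -all_count; apply/allP => c _; rewrite rkm.
have Nmono : forall r r', (r <= r')%N -> (N r <= N r')%N.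
  by move=> r r' h; apply: sub_count => c /= h'; apply: leq_trans h' h.
have km : (k <= m)%N by rewrite -hW -hC max_card.
have exP : exists r, (1 <= r)%N && (j < N r)%N.
  by exists m; rewrite Nm hj andbT; apply: leq_trans (leq_trans hj km).
case: (ex_minnP exP) => r0 /andP[r0ge1 Pr0] r0min.
have r0m : (r0 <= m)%N.
  by apply: r0min; rewrite Nm hj andbT; apply: leq_trans (leq_trans hj km).
have N0 : N 0%N = 0%N.
  rewrite /N; apply/eqP; rewrite -leqn0 leqNgt -has_count; apply/hasPn => c _ /=.
  by [].
have Nprev : (N r0.-1 <= j)%N.
  case E: r0 => [|[|r0']] /=.
  - by move: r0ge1; rewrite E.
  - by rewrite N0.
  - rewrite leqNgt; apply/negP => h.
    by have := r0min r0'.+1; rewrite h /= => /(_ isT); rewrite E ltnn.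
rewrite (big_cat_nat r0ge1 (leqW r0m)) /=.
rewrite big_nat_cond big1 ?add0r; last first.
  move=> r /andP[/andP[h1 h2] _].
  have : ~~ (j < N r)%N.
    apply/negP => h; have := r0min r; rewrite h1 h /= => /(_ isT).
    by rewrite leqNgt h2.
  by move/negbTE => ->; rewrite mulr0.
have -> : \sum_(r0 <= r < m.+1) wdiff Rt w m r * (j < N r)%N%:R =
    \sum_(r0 <= r < m.+1) - ((wext w m r.+1)%:R - (wext w m r)%:R : Rt).
  apply: eq_big_nat => r /andP[h1 h2].
  by rewrite (leq_trans Pr0 (Nmono _ _ h1)) mulr1 /wdiff opprB.
rewrite sumrN (telescope_sumr _ (leqW r0m)) opprB /wext r0m ltnn subr0.
have ps : perm_eq (sort >=%R s) s by apply: permEl; apply: perm_sort.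
have pc : forall a, count a (sort >=%R s) = count a s by apply/permP.
have tot : total (>=%R : rel Rt) by move=> x y; rewrite /= orbC le_total.
have st := sort_sorted tot s.
apply/le_anti/andP; split.
- apply: nth_le_of_count => //.
    by rewrite size_sort size_map szW.
  rewrite size_sort size_map szW pc count_map.
  pose q := fun c => (r0 <= rank R c)%N.
  have hq := count_predC q (enum W).
  have hpc : count (predC q) (enum W) = N r0.-1.
    apply: eq_count => c /=; rewrite /q.
    by rewrite -ltnNge -[in LHS](prednK r0ge1) ltnS.
  rewrite hpc szW in hq.
  apply: (@leq_trans (count q (enum W))).
    by move: hq Nprev; lia.
  apply: sub_count => c /= h; rewrite ler_nat.
  by apply: wmono => //; apply: rkm.
- apply: nth_ge_of_count => //.
  rewrite pc count_map.
  apply: (leq_trans Pr0); apply: sub_count => c /= h; rewrite ler_nat.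
  by apply: wmono.
Qed.
Arguments nth_val {Rt C m k R w W j}.


Definition gx (C : finType) (n k : nat) (P : 'I_n -> rel C) (W : {set C})
  : 'I_n -> 'I_k -> nat -> bool :=
  fun i l r => (l < #|[set c | (c \in W) && (rank (P i) c <= r)%N]|)%N.
Arguments gx {C n} k P W.

Lemma card_y (C : finType) (k n m : nat) (P : 'I_n -> rel C) (x : 'I_n -> 'I_k -> nat -> bool) (y : C -> bool) :
  ip_feasible P m x y -> #|[set c | y c]| = k.
Proof.
move=> [hs _]; rewrite -hs -sum1_card big_mkcond /=.
by apply: eq_bigr => c _; rewrite inE; case: (y c).
Qed.
Arguments card_y {C k n m P x y}.


Lemma feas_greedy (C : finType) (k n m : nat) (P : 'I_n -> rel C) (W : {set C}) :
  #|W| = k -> ip_feasible P m (gx k P W) (fun c => c \in W).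
Proof.
move=> hW; split.
  rewrite -hW -sum1_card [RHS]big_mkcond /=.
  by apply: eq_bigr => c _; case: (c \in W).
move=> i r _; rewrite /gx.
set N := #|_|.
have hN : (N <= k)%N.
  rewrite -hW; apply: subset_leq_card; apply/subsetP => c; rewrite inE.
  by case/andP.
rewrite leq_eqVlt; apply/orP; left; apply/eqP.
transitivity (#|[set l : 'I_k | (l < N)%N]|); last exact: card_lt hN.
rewrite -sum1_card [RHS]big_mkcond /=.
by apply: eq_bigr => l _; rewrite inE; case: (l < N)%N.
Qed.
Arguments feas_greedy {C k n m P W}.


Lemma obj_greedy (Rt : realType) (C : finType) (m n k : nat)
    (P : 'I_n -> rel C) (w : nat -> nat) (alpha : 'I_k -> Rt) (W : {set C}) :
  #|C| = m -> (forall i, weak_order (P i)) ->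
  (forall r s : nat, (1 <= r)%N -> (r <= s)%N -> (s <= m)%N -> (w s <= w r)%N) ->
  #|W| = k -> ip_obj alpha w m (gx k P W) = owa_score alpha P w W.
Proof.
move=> hC wo wmono hW.
rewrite /ip_obj /owa_score; apply: eq_bigr => i _; rewrite /owa.
apply: eq_bigr => l _.
rewrite (nth_val hC (wo i) wmono hW (ltn_ord l)) mulr_sumr.
by apply: eq_bigr => r _; rewrite mulrA.
Qed.
Arguments obj_greedy {Rt C m n k P w} alpha {W}.


Lemma wdiff_ge0 (Rt : realType) (m : nat) (w : nat -> nat) r :
  (forall r s : nat, (1 <= r)%N -> (r <= s)%N -> (s <= m)%N -> (w s <= w r)%N) ->
  (1 <= r)%N -> (r <= m)%N -> 0 <= wdiff Rt w m r.
Proof.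
move=> wmono h1 h2; rewrite /wdiff subr_ge0 ler_nat /wext h2.
case: ifP => // h3; exact: wmono.
Qed.
Arguments wdiff_ge0 {Rt m w r}.


Lemma obj_bound (Rt : realType) (C : finType) (m n k : nat)
    (P : 'I_n -> rel C) (w : nat -> nat) (alpha : 'I_k -> Rt) (x : 'I_n -> 'I_k -> nat -> bool) (y : C -> bool) :
  #|C| = m -> (forall i, weak_order (P i)) ->
  (forall r s : nat, (1 <= r)%N -> (r <= s)%N -> (s <= m)%N -> (w s <= w r)%N) ->
  (forall l1 l2 : 'I_k, (l1 <= l2)%N -> alpha l2 <= alpha l1) ->
  (forall l : 'I_k, 0 <= alpha l) ->
  ip_feasible P m x y -> ip_obj alpha w m x <= owa_score alpha P w [set c | y c].
Proof.
move=> hC wo wmono hdec hpos hf.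
have hk := card_y hf.
rewrite -(obj_greedy alpha hC wo wmono hk).
rewrite /ip_obj; apply: ler_sum => i _.
rewrite exchange_big [X in _ <= X]exchange_big /=.
apply: ler_sum_nat => r /andP[h1 h2].
have hr : (r <= m)%N by rewrite -ltnS.
under eq_bigr do rewrite mulrAC.
under [X in _ <= X]eq_bigr do rewrite mulrAC.
rewrite -!mulr_suml; apply: ler_wpM2r; first exact: wdiff_ge0.
rewrite /gx; apply: rearr => //.
have -> : [set c | (c \in [set c0 | y c0]) && (rank (P i) c <= r)%N] =
          [set c | y c && (rank (P i) c <= r)%N].
  by apply/setP => c; rewrite !inE.
case: hf => _ hf; apply: hf; by rewrite h1 hr.
Qed.
Arguments obj_bound {Rt C m n k P w} alpha {x y}.


Theorem mainTheorem6 (Rt : realType) (C : finType) (m n k : nat)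
    (P : 'I_n -> rel C) (w : nat -> nat) (alpha : 'I_k -> Rt) :
  #|C| = m ->
  (0 < k)%N -> (k <= m)%N ->
  (forall i, weak_order (P i)) ->
  (forall r s : nat, (1 <= r)%N -> (r <= s)%N -> (s <= m)%N -> (w s <= w r)%N) ->
  (forall l1 l2 : 'I_k, (l1 <= l2)%N -> alpha l2 <= alpha l1) ->
  (forall l : 'I_k, 0 <= alpha l) ->
  [/\ (exists x y, ip_optimal alpha P w m x y),
      (forall x y (W : {set C}), ip_optimal alpha P w m x y ->
          optimal_committee alpha P w W -> ip_obj alpha w m x = owa_score alpha P w W)
    & (forall x y, ip_optimal alpha P w m x y ->
          optimal_committee alpha P w [set c | y c])].
Proof.
move=> hC hk0 hkm wo wmono hdec hpos.
have bound := fun x y => @obj_bound _ _ _ _ _ _ _ alpha x y hC wo wmono hdec hpos.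
have greedy := fun W => @obj_greedy _ _ _ _ _ _ _ alpha W hC wo wmono.
pose W0 := [set x in take k (enum C)].
have hW0 : #|W0| == k.
  rewrite cardsE; apply/eqP; rewrite (card_uniqP _).
    by rewrite size_takel // -cardE hC.
  by apply: take_uniq; apply: enum_uniq.
case: (@arg_maxP _ _ _ W0 (fun W : {set C} => #|W| == k) (fun W : {set C} => owa_score alpha P w W) hW0) => Wopt /eqP hWo hmax.
split.
- exists (gx k P Wopt), (fun c => c \in Wopt); split; first exact: feas_greedy.
  move=> x' y' hf; apply: (le_trans (bound _ _ hf)); rewrite greedy //.
  by have := hmax [set c | y' c]; rewrite /= (card_y hf) eqxx => /(_ isT).
- move=> x y W [hf hopt] [hW hWmax]; apply/le_anti/andP; split.
    by apply: (le_trans (bound _ _ hf)); apply: (hWmax [set c | y c]); apply: card_y hf.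
  by rewrite -greedy //; apply: (hopt _ (fun c => c \in W)); apply: feas_greedy.
- move=> x y [hf hopt]; split; first exact: card_y hf.
  move=> W' hW'; rewrite -greedy //; apply: (le_trans _ (bound _ _ hf)).
  by apply: (hopt _ (fun c => c \in W')); apply: feas_greedy.
Qed.
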